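(* Let $d$ be an integer and $x$ a real number with $0<d\leqslant x$. Let $K_d$ be the largest integer $k$ such that $(k-d)k\leqslant dx$ (i.e. $K_d=\lfloor (d+\sqrt{d^2+4dx})/2\rfloor$), and let $N_d$ be the largest integer $n$ such that $n(n+1)\leqslant x/d$ (i.e. $N_d=\lfloor(-1+\sqrt{1+4x/d}\,)/2\rfloor$). Then $$\lfloor x/(K_d+1)\rfloor \leqslant N_d \leqslant \lfloor x/K_d\rfloor.$$
   Context: $\lfloor t\rfloor$ denotes the integer part of the real number $t$. *)

(* Defs.v *)
From Stdlib Require Import Reals ZArith Lra Lia.
Open Scope R_scope.

(* floor t = integer part of t (Int_part r = up r - 1, the floor). *)
Definition floorR (t : R) : Z := Int_part t.

Definition is_greatest_Z (P : Z -> Prop) (k : Z) : Prop :=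
  P k /\ forall m : Z, P m -> (m <= k)%Z.

(* Main.v *)
Require Import Defs.
From Stdlib Require Import Reals ZArith Lra Lia Psatz.
Open Scope R_scope.

Theorem proposition4 (d : Z) (x : R) (K N : Z) :
  (0 < d)%Z -> IZR d <= x ->
  is_greatest_Z (fun k => IZR ((k - d) * k) <= IZR d * x) K ->
  is_greatest_Z (fun n => IZR (n * (n + 1)) <= x / IZR d) N ->
  (floorR (x / IZR (K + 1)) <= N /\ N <= floorR (x / IZR K))%Z.
Proof.
  intros Hd Hdx [HK HKm] [HN HNm].
  assert (dpos : 0 < IZR d) by (apply IZR_lt; lia).
  assert (KdZ : (d <= K)%Z).
  { apply HKm. replace ((d - d) * d)%Z with 0%Z by ring. nra. }
  assert (N0 : (0 <= N)%Z).
  { apply HNm. simpl. apply Rmult_le_pos; [lra| left; apply Rinv_0_lt_compat; lra]. }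
  assert (HK1 : ~ IZR ((K + 1 - d) * (K + 1)) <= IZR d * x)
    by (intro H; specialize (HKm _ H); lia).
  assert (HN1 : ~ IZR ((N + 1) * (N + 1 + 1)) <= x / IZR d)
    by (intro H; specialize (HNm _ H); lia).
  assert (Kd : IZR d <= IZR K) by (apply IZR_le; lia).
  assert (Nn : 0 <= IZR N) by (apply IZR_le; lia).
  rewrite !mult_IZR, !plus_IZR, !minus_IZR in *.
  replace (IZR (K + 1)) with (IZR K + 1) in HK1 by (rewrite plus_IZR; reflexivity).
  apply Rnot_le_lt in HK1. apply Rnot_le_lt in HN1.
  apply Rmult_le_compat_r with (r := IZR d) in HN; [|lra].
  replace (x / IZR d * IZR d) with x in HN by (field; lra).
  assert (HN1' : x < (IZR N + 1) * (IZR N + 2) * IZR d).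
  { apply Rmult_lt_compat_r with (r := IZR d) in HN1; [|lra].
    replace (x / IZR d * IZR d) with x in HN1 by (field; lra). nra. }
  assert (A : IZR N * IZR K <= x).
  { destruct (Z_le_gt_dec ((N+1)*d) K) as [c|c].
    - apply IZR_le in c. rewrite mult_IZR, plus_IZR in c. nra.
    - assert (c' : IZR K <= IZR ((N + 1) * d)) by (apply IZR_le; lia).
      rewrite ?mult_IZR, ?plus_IZR in c'. nra. }
  assert (B : x < (IZR N + 1) * (IZR K + 1)).
  { destruct (Z_le_gt_dec (K+1-d) ((N+1)*d)) as [c|c].
    - apply IZR_le in c. rewrite mult_IZR, !plus_IZR, minus_IZR, plus_IZR in c.
      assert (H0 : (IZR K+1-IZR d)*(IZR K+1) <= (IZR N+1)*IZR d*(IZR K+1)) by (apply Rmult_le_compat_r; lra).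
      assert (IZR d * x < IZR d * ((IZR N + 1) * (IZR K + 1))) by (idtac; lra).
      apply Rmult_lt_reg_l in H; lra.
    - assert (c' : (IZR N + 2) * IZR d <= IZR K + 1).
      { replace (IZR N + 2) with (IZR (N+2)) by (rewrite plus_IZR; reflexivity).
        rewrite <- mult_IZR. replace (IZR K + 1) with (IZR (K+1)) by (rewrite plus_IZR; reflexivity).
        apply IZR_le. lia. }
      nra. }
  assert (Kp : 0 < IZR K) by lra.
  unfold floorR. split.
  - destruct (base_Int_part (x / (IZR K + 1))) as [f1 f2].
    assert (x / (IZR K + 1) < IZR N + 1).
    { apply (Rmult_lt_reg_r (IZR K + 1)); [lra|].
      replace (x / (IZR K + 1) * (IZR K + 1)) with x by (field; lra). nra. }
    assert (IZR (Int_part (x / (IZR K + 1))) < IZR (N + 1)) by (rewrite plus_IZR; lra).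
    apply lt_IZR in H0. lia.
  - destruct (base_Int_part (x / IZR K)) as [f1 f2].
    assert (IZR N <= x / IZR K).
    { apply (Rmult_le_reg_r (IZR K)); [lra|].
      replace (x / IZR K * IZR K) with x by (field; lra). lra. }
    assert (IZR (N - 1) < IZR (Int_part (x / IZR K))) by (rewrite minus_IZR; lra).
    apply lt_IZR in H0. lia.
Qed.
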